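(* Let $m\ge2$ and capacities $B_1,\dots,B_m>0$. Fix an online fractional scheduling algorithm whose output satisfies average block size $B=(B_j)$ with slackness $\Delta(T)=o(T)$ and which uses extension $\Gamma(T)=o(T)$. Then for every horizon $T$ there is an input consisting only of fully patient transactions ($\rho_i=0$ for all $i$) such that the algorithm's output $x$ satisfies $$\frac{SW_{[1:T+\Gamma(T)]}(x)}{SW_{[1:T]}(y)}\le \frac78+o(1),$$ where $y$ is the optimal integral allocation for horizon $T$ respecting the per-block limits $B_j$, and $o(1)$ is as $T\to\infty$.
   Context: Online block packing: $m$ resources with capacities $B_j>0$; transactions $i$ with arrival time $a_i\in\{1,2,\dots\}$, base value $v_i\ge0$, discount $\rho_i\in[0,1]$, demand $w_i\in\mathbb{R}_+^m$; value in block $t\ge a_i$ is $v_i^t=v_i(1-\rho_i)^{t-a_i}$. A fractional allocation is $x=\{x_i^t\}$ with $x_i^t\in[0,1]$, $x_i^t=0$ for $t<a_i$, $\sum_tx_i^t\le1$; integral if all entries are in $\{0,1\}$; it respects per-block limits if $\sum_iw_{ij}x_i^t\le B_j$ for all $t,j$. It has average block size $B$ with slackness $\Delta$ if for all $T_0,K\ge1$ and $j$: $\sum_{t=T_0}^{T_0+K-1}\sum_ix_i^tw_{ij}\le(K+\Delta)B_j$. $SW_{[1:T]}(x)=\sum_{t=1}^T\sum_ix_i^tv_i^t$. An online algorithm decides block $t$ using only transactions with $a_i\le t$; ''uses extension $\Gamma$'' means its welfare is measured up to time $T+\Gamma$ when compared with the benchmark up to $T$. *)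

(* Defs.v *)
From HB Require Import structures.
From mathcomp Require Import all_boot all_order all_algebra.
From mathcomp Require Export reals.
Set Implicit Arguments. Unset Strict Implicit. Unset Printing Implicit Defensive.
Import Order.TTheory GRing.Theory Num.Theory.
Local Open Scope ring_scope.

Section BlockPacking.
Variables (R : realType) (m : nat).

(* A transaction: base value v, discount rho, demand vector w (arrival time is
   given by the batch it belongs to, see [input]). *)
Record tx := Tx { tx_v : R; tx_rho : R; tx_w : 'I_m -> R }.

Definition tx0 : tx := Tx 0 0 (fun _ => 0).

(* An input is a finite list of batches: [nth [::] I (a-1)] is the list of
   transactions arriving at block a (a >= 1).  A transaction is identified by
   the pair (a, k): its arrival time a and its position k in that batch. *)
Definition input := seq (seq tx).

Definition batch (I : input) (a : nat) : seq tx := nth [::] I a.-1.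

Definition tids (I : input) : seq (nat * nat) :=
  [seq (a, k) | a <- iota 1 (size I), k <- iota 0 (size (batch I a))].

Definition tx_of (I : input) (p : nat * nat) : tx := nth tx0 (batch I p.1) p.2.

Definition arrival (p : nat * nat) : nat := p.1.

(* v_i^t = v_i (1 - rho_i)^(t - a_i)  (used only for t >= a_i) *)
Definition value (I : input) (p : nat * nat) (t : nat) : R :=
  tx_v (tx_of I p) * (1 - tx_rho (tx_of I p)) ^+ (t - arrival p).

Definition valid_input (I : input) : Prop :=
  forall p, p \in tids I ->
    [/\ 0 <= tx_v (tx_of I p), 0 <= tx_rho (tx_of I p) <= 1
      & forall j, 0 <= tx_w (tx_of I p) j].

(* An allocation: x p t is the fraction x_i^t of transaction p in block t. *)
Definition alloc := nat * nat -> nat -> R.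

Definition fractional (I : input) (x : alloc) : Prop :=
  [/\ forall p t, p \in tids I -> 0 <= x p t <= 1,
      forall p t, p \in tids I -> (t < arrival p)%N -> x p t = 0
    & forall p H, p \in tids I -> \sum_(1 <= t < H.+1) x p t <= 1].

Definition integral (I : input) (x : alloc) : Prop :=
  forall p t, p \in tids I -> x p t = 0 \/ x p t = 1.

Definition load (I : input) (x : alloc) (t : nat) (j : 'I_m) : R :=
  \sum_(p <- tids I) x p t * tx_w (tx_of I p) j.

Definition respects_limits (I : input) (B : 'I_m -> R) (x : alloc) : Prop :=
  forall t j, load I x t j <= B j.

Definition avg_block_size (I : input) (B : 'I_m -> R) (Delta : R) (H : nat)
  (x : alloc) : Prop :=
  forall j T0 K, (1 <= T0)%N -> (1 <= K)%N -> (T0 + K - 1 <= H)%N ->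
    \sum_(T0 <= t < T0 + K) load I x t j <= (K%:R + Delta) * B j.

Definition SW (I : input) (H : nat) (x : alloc) : R :=
  \sum_(1 <= t < H.+1) \sum_(p <- tids I) x p t * value I p t.

Definition feasible_integral (I : input) (B : 'I_m -> R) (y : alloc) : Prop :=
  [/\ fractional I y, integral I y & respects_limits I B y].

(* An online algorithm: at block t it is given exactly the batches of
   arrivals at blocks 1..t and outputs the fractions of block t, as a list
   (indexed by arrival time - 1) of lists (indexed by position in batch). *)
Definition online_alg := seq (seq tx) -> seq (seq R).

Definition prefix (I : input) (t : nat) : input :=
  [seq nth [::] I s | s <- iota 0 t].

Definition run (A : online_alg) (I : input) : alloc :=
  fun p t => nth 0 (nth [::] (A (prefix I t)) p.1.-1) p.2.

End BlockPacking.

Definition little_o_id (R : realType) (f : nat -> R) : Prop :=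
  forall eps : R, 0 < eps -> exists N, forall T, (N <= T)%N -> `|f T| <= eps * T%:R.

(* Main.v *)
Require Import Defs.
From HB Require Import structures.
From mathcomp Require Import all_boot all_order all_algebra.
From mathcomp Require Import reals.
From mathcomp Require Import zify ring lra.
Set Implicit Arguments. Unset Strict Implicit. Unset Printing Implicit Defensive.
Import Order.TTheory GRing.Theory Num.Theory.
Local Open Scope ring_scope.

Lemma sum_shift (R : realType) a b s t :
  \sum_(a <= k < b) (((t == s + k)%N)%:R : R) = (((a + s <= t) && (t < b + s))%N)%:R.
Proof.
elim: b => [|b IH].
  rewrite big_geq //; case: (leqP (a + s) t) => h1 //=.
  by rewrite ltnNge (leq_trans (leq_addl a s) h1).
case: (leqP a b) => ab.
  rewrite big_nat_recr //= IH -natrD; congr (_%:R).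
  case: (leqP (a+s) t) => h1; case: (ltnP t (b+s)) => h2;
  case: (ltnP t (b.+1+s)) => h4; case: (eqVneq t (s+b)) => h3 /=; lia.
rewrite big_geq //; case: (leqP (a + s) t) => h1 //=.
have -> : (t < b.+1 + s)%N = false by apply/negbTE; rewrite -leqNgt; lia.
by [].
Qed.

Lemma sum_range (R : realType) a b lo hi : (a <= lo)%N -> (lo <= hi)%N -> (hi <= b)%N ->
  \sum_(a <= t < b) ((((lo <= t) && (t < hi))%N)%:R : R) = (hi - lo)%:R.
Proof.
move=> alo lohi hib.
have ab : (lo <= b)%N by apply: leq_trans hib.
rewrite (@big_cat_nat _ _ _ lo a b _ _ alo ab) /= (@big_cat_nat _ _ _ hi lo b _ _ lohi hib) /=.
rewrite big1_seq ?add0r; last first.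
  by move=> t /andP[_]; rewrite mem_index_iota => /andP[_ tl]; rewrite leqNgt tl.
rewrite [X in _ + X]big1_seq ?addr0; last first.
  by move=> t /andP[_]; rewrite mem_index_iota => /andP[ht _]; rewrite ltnNge ht andbF.
rewrite -sumr_const_nat; apply: eq_big_nat => t /andP[-> ->]. done.
Qed.

Lemma b01 (R : realType) (b : bool) : 0 <= ((b : nat)%:R : R) <= 1.
Proof. by case: b; rewrite /= ?lexx ?ler01. Qed.

Lemma sum_eq1 (R : realType) a b v :
  \sum_(a <= t < b) (((t == v)%N)%:R : R) <= 1.
Proof.
rewrite (eq_bigr (fun t => (((v == 0 + t)%N)%:R : R))); last by move=> t _; rewrite add0n eq_sym.
by rewrite sum_shift; apply: (proj2 (andP (b01 R _))).
Qed.

Lemma bsum_le1 (R : realType) (b1 b2 : bool) : (b1 -> ~~ b2) ->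
  ((b1 : nat)%:R + (b2 : nat)%:R : R) <= 1.
Proof.
case: b1; case: b2 => H /=; rewrite ?add0r ?addr0 ?lexx ?ler01 //.
by have := H isT.
Qed.


Section Gadget.
Variables (R : realType) (m : nat) (B : 'I_m -> R).

Definition wD (j : 'I_m) : R := if (j < 2)%N then B j else 0.
Definition wB (j : 'I_m) : R := if (j == 1 :> nat) then B j else 0.
Definition wL1 (j : 'I_m) : R := if (j == 0 :> nat) then B j else 0.
Definition txD : tx R m := Tx 1 0 wD.
Definition txB : tx R m := Tx 2 0 wB.
Definition txL1 : tx R m := Tx 1 0 wL1.

Definition early h : seq (tx R m) := nseq h txD ++ nseq h txB.

Definition mkI (h c : nat) (L : tx R m) : input R m :=
  [seq (if a == 0 then early h else if a == h then nseq c L else [::])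
  | a <- iota 0 h.+1].

Lemma size_mkI h c L : size (mkI h c L) = h.+1.
Proof. by rewrite size_map size_iota. Qed.

Lemma batch_mkI h c L a : (0 < h)%N -> (1 <= a)%N ->
  batch (mkI h c L) a =
  if a == 1 then early h else if a == h.+1 then nseq c L else [::].
Proof.
move=> h0 a1; rewrite /batch /mkI.
case: (ltnP a.-1 h.+1) => ha.
  rewrite (nth_map 0%N) ?size_iota // nth_iota // add0n.
  by case: a a1 ha => [|[|a]] //= _ ha.
rewrite nth_default ?size_map ?size_iota //.
case: a a1 ha => [|[|a]] //= _ ha.
by rewrite eqSS; case: eqP => // E; move: ha; rewrite -E ltnn.
Qed.


Lemma iota_idx a n : iota a n = index_iota a (a + n).
Proof. by rewrite /index_iota addKn. Qed.

Lemma sum_tids h c L (F : nat * nat -> R) : (0 < h)%N ->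
  \sum_(p <- tids (mkI h c L)) F p =
  \sum_(0 <= k < h) F (1%N, k) + \sum_(h <= k < h + h) F (1%N, k)
  + \sum_(0 <= k < c) F (h.+1, k).
Proof.
move=> h0; rewrite /tids big_allpairs_dep size_mkI iota_idx.
have mid : \sum_(2 <= a < h.+1)
    \sum_(i2 <- iota 0 (size (batch (mkI h c L) a))) F (a, i2) = 0.
  rewrite big_nat big1 // => a /andP[a2 ah]; rewrite batch_mkI //; last by apply: ltnW.
  rewrite ifF; last by apply/negbTE; rewrite neq_ltn a2 orbT.
  by rewrite ifF ?big_nil //; apply/negbTE; rewrite neq_ltn ah.
rewrite big_nat_recr //= big_ltn // mid.
have hn1 : (h.+1 == 1) = false by case: (h) h0.
rewrite addr0 !batch_mkI // eqxx hn1 eqxx /early size_cat !size_nseq !iota_idx !add0n.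
by rewrite (big_cat_nat _ (n:=h)) ?leq_addr.
Qed.


Lemma mem_tids_mkI h c L p : (0 < h)%N ->
  (p \in tids (mkI h c L)) =
  ((p.1 == 1%N) && (p.2 < h + h)%N) || ((p.1 == h.+1) && (p.2 < c)%N).
Proof.
move=> h0; have hn1 : (h.+1 == 1) = false by case: (h) h0.
apply/allpairsPdep/idP.
  move=> [a [k [ain kin ->]]] /=.
  move: ain; rewrite mem_iota size_mkI => /andP[a1 ah].
  move: kin; rewrite mem_iota add0n batch_mkI //.
  case: eqP => [->|_]; first by rewrite /early size_cat !size_nseq => /andP[_ ->].
  case E: (a == h.+1); first by rewrite size_nseq => /andP[_ ->]; rewrite orbT.
  by rewrite /= ltn0.
move=> /orP[/andP[/eqP e kh]|/andP[/eqP e kc]].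
  exists 1%N, p.2; split; first by rewrite mem_iota size_mkI.
    by rewrite mem_iota batch_mkI // /early size_cat !size_nseq.
  by case: p e {kh} => ? ? /= ->.
exists h.+1, p.2; split; first by rewrite mem_iota size_mkI ltnS leqnn.
  by rewrite mem_iota batch_mkI // hn1 eqxx size_nseq.
by case: p e {kc} => ? ? /= ->.
Qed.

Lemma txof1 h c L k : (0 < h)%N -> (k < h + h)%N ->
  tx_of (mkI h c L) (1%N, k) = if (k < h)%N then txD else txB.
Proof.
move=> h0 kh; rewrite /tx_of batch_mkI //= /early nth_cat size_nseq.
case: ifP => khh; first by rewrite nth_nseq khh.
by rewrite nth_nseq ltn_subLR ?kh // leqNgt khh.
Qed.

Lemma txofL h c L k : (0 < h)%N -> (k < c)%N ->
  tx_of (mkI h c L) (h.+1, k) = L.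
Proof.
move=> h0 kc; have hn1 : (h.+1 == 1) = false by case: (h) h0.
by rewrite /tx_of batch_mkI //= hn1 eqxx nth_nseq kc.
Qed.


Definition dS h (x : alloc R) t := \sum_(0 <= k < h) x (1%N, k) t.
Definition bS h (x : alloc R) t := \sum_(h <= k < h + h) x (1%N, k) t.
Definition lS h c (x : alloc R) t := \sum_(0 <= k < c) x (h.+1, k) t.

Lemma load_dec h c L x t j : (0 < h)%N ->
  load (mkI h c L) x t j = dS h x t * wD j + bS h x t * wB j + lS h c x t * tx_w L j.
Proof.
move=> h0; rewrite /load sum_tids // /dS /bS /lS !mulr_suml.
congr (_ + _ + _); apply: eq_big_nat => k /andP[k0 kh].
- by rewrite txof1 // ?kh ?(leq_trans kh) ?leq_addr.
- by rewrite txof1 // ltnNge k0.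
- by rewrite txofL.
Qed.

Lemma SW_dec h c L x H : (0 < h)%N -> tx_rho L = 0 ->
  SW (mkI h c L) H x =
  \sum_(1 <= t < H.+1) (dS h x t + 2 * bS h x t + tx_v L * lS h c x t).
Proof.
move=> h0 rL; rewrite /SW; apply: eq_bigr => t _.
rewrite sum_tids // /dS /bS /lS !mulr_sumr.
congr (_ + _ + _); apply: eq_big_nat => k /andP[k0 kh]; rewrite /value.
- by rewrite txof1 // ?kh ?(leq_trans kh) ?leq_addr //= subr0 expr1n !mulr1.
- by rewrite txof1 // ltnNge k0 /= subr0 expr1n mulr1 mulrC.
- by rewrite txofL // rL subr0 expr1n mulr1 mulrC.
Qed.


Lemma txof_cases h c L p : (0 < h)%N -> p \in tids (mkI h c L) ->
  [\/ tx_of (mkI h c L) p = txD, tx_of (mkI h c L) p = txB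
     | tx_of (mkI h c L) p = L].
Proof.
move=> h0; rewrite mem_tids_mkI // => /orP[/andP[/eqP e kh]|/andP[/eqP e kc]].
  rewrite (surjective_pairing p) e txof1 //.
  by case: ifP => _; [apply: Or31 | apply: Or32].
by rewrite (surjective_pairing p) e txofL //; apply: Or33.
Qed.

Lemma valid_mkI h c L : (0 < h)%N -> (forall j, 0 <= B j) ->
  0 <= tx_v L -> tx_rho L = 0 -> (forall j, 0 <= tx_w L j) ->
  valid_input (mkI h c L).
Proof.
move=> h0 B0 vL rL wL p pin; case: (@txof_cases h c L p h0 pin) => ->; split => //=;
  rewrite ?rL ?lexx ?ler01 // => j;
  by rewrite /wD /wB; case: ifP.
Qed.

Lemma rho_mkI h c L : (0 < h)%N -> tx_rho L = 0 ->
  forall p, p \in tids (mkI h c L) -> tx_rho (tx_of (mkI h c L) p) = 0.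
Proof. by move=> h0 rL p pin; case: (@txof_cases h c L p h0 pin) => ->. Qed.


Section Frac.
Variables (h c : nat) (L : tx R m) (x : alloc R).
Hypothesis h0 : (0 < h)%N.
Hypothesis fx : fractional (mkI h c L) x.

Lemma mem1 k : (k < h + h)%N -> (1%N, k) \in tids (mkI h c L).
Proof. by move=> kh; rewrite mem_tids_mkI //= ?eqxx kh. Qed.

Lemma memL k : (k < c)%N -> (h.+1, k) \in tids (mkI h c L).
Proof. by move=> kc; rewrite mem_tids_mkI //= ?eqxx kc orbT. Qed.

Lemma dS_ge0 t : 0 <= dS h x t.
Proof.
case: fx => f1 _ _; rewrite /dS big_seq; apply: sumr_ge0 => k; rewrite mem_index_iota => /andP[_ kh].
by case/andP: (f1 _ t (@mem1 _ (leq_trans kh (leq_addr _ _)))).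
Qed.

Lemma bS_ge0 t : 0 <= bS h x t.
Proof.
case: fx => f1 _ _; rewrite /bS big_seq; apply: sumr_ge0 => k; rewrite mem_index_iota => /andP[_ kh].
by case/andP: (f1 _ t (@mem1 _ kh)).
Qed.

Lemma lS_ge0 t : 0 <= lS h c x t.
Proof.
case: fx => f1 _ _; rewrite /lS big_seq; apply: sumr_ge0 => k; rewrite mem_index_iota => /andP[_ kh].
by case/andP: (f1 _ t (@memL _ kh)).
Qed.

Lemma lS_early t : (t < h.+1)%N -> lS h c x t = 0.
Proof.
case: fx => _ f2 _ th; apply: big1_seq => k /andP[_]; rewrite mem_index_iota => /andP[_ kc].
by apply: f2 => //; apply: memL.
Qed.

Lemma sum_dS H : \sum_(1 <= t < H.+1) dS h x t <= h%:R.
Proof.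
case: fx => _ _ f3; rewrite /dS exchange_big_nat /=.
rewrite -[h in X in _ <= X]subn0 -sumr_const_nat; apply: ler_sum_nat => k /andP[_ kh].
by apply: f3; apply: mem1; apply: (leq_trans kh); apply: leq_addr.
Qed.

Lemma sum_bS H : \sum_(1 <= t < H.+1) bS h x t <= h%:R.
Proof.
case: fx => _ _ f3; rewrite /bS exchange_big_nat /=.
rewrite -[h in X in _ <= X](addKn h h) -sumr_const_nat; apply: ler_sum_nat => k /andP[_ kh].
by apply: f3; apply: mem1.
Qed.

Lemma sum_lS H : \sum_(1 <= t < H.+1) lS h c x t <= c%:R.
Proof.
case: fx => _ _ f3; rewrite /lS exchange_big_nat /=.
rewrite -[c in X in _ <= X]subn0 -sumr_const_nat; apply: ler_sum_nat => k /andP[_ kh].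
by apply: f3; apply: memL.
Qed.
End Frac.


Hypothesis Bpos : forall j, 0 < B j.

Definition y1 : alloc R := fun p t => ((t == p.1 + p.2)%N : nat)%:R.
Definition y2 h : alloc R := fun p t =>
  if p.1 == 1%N then (((h <= p.2) && (t + h == 1 + p.2))%N : nat)%:R
  else ((t == p.1 + p.2)%N : nat)%:R.

Lemma dS_y1 h t : dS h y1 t = (((1 <= t) && (t < h + 1))%N : nat)%:R.
Proof. by rewrite /dS sum_shift. Qed.
Lemma bS_y1 h t : bS h y1 t = (((h + 1 <= t) && (t < h + h + 1))%N : nat)%:R.
Proof. by rewrite /bS sum_shift. Qed.
Lemma lS_y h c t : lS h c y1 t = (((h.+1 <= t) && (t < c + h.+1))%N : nat)%:R.
Proof. by rewrite /lS sum_shift. Qed.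
Lemma dS_y2 h t : dS h (y2 h) t = 0.
Proof.
rewrite /dS big1_seq // => k /andP[_]; rewrite mem_index_iota => /andP[_ kh].
by rewrite /y2 /= leqNgt kh.
Qed.
Lemma bS_y2 h t : bS h (y2 h) t = (((1 <= t) && (t < h + 1))%N : nat)%:R.
Proof.
rewrite /bS (eq_big_nat _ _ (F2 := fun k => (((t + h == 1 + k)%N : nat)%:R : R))); last first.
  by move=> k /andP[hk _]; rewrite /y2 /= hk.
rewrite sum_shift; congr (_%:R); congr (nat_of_bool _).
by apply/idP/idP => /andP[u v]; apply/andP; split; lia.
Qed.
Lemma lS_y2 h c t : (0 < h)%N -> lS h c (y2 h) t = (((h.+1 <= t) && (t < c + h.+1))%N : nat)%:R.
Proof.
move=> h0; rewrite /lS.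
transitivity (\sum_(0 <= k < c) (((t == h.+1 + k)%N : nat)%:R : R)); last by rewrite sum_shift.
by apply: eq_bigr => k _; rewrite /y2 /=; case: (h) h0.
Qed.


Lemma frac_y1 h c L : fractional (mkI h c L) y1.
Proof.
split.
- by move=> p t _; apply: b01.
- move=> p t _ tp; rewrite /y1 /arrival in tp *.
  by rewrite (_ : (t == p.1 + p.2) = false) //; apply/negbTE; rewrite neq_ltn (leq_trans tp) ?leq_addr.
- by move=> p H _; apply: sum_eq1.
Qed.

Lemma int_y1 h c L : integral (mkI h c L) y1.
Proof. by move=> p t _; rewrite /y1; case: (_ == _); [right|left]. Qed.

Lemma frac_y2 h c L : fractional (mkI h c L) (y2 h).
Proof.
split.
- by move=> p t _; rewrite /y2; case: ifP => _; apply: b01.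
- move=> p t _ tp; rewrite /y2 /arrival in tp *; case: ifP => [/eqP e|_].
    rewrite (_ : ((h <= p.2) && (t + h == 1 + p.2))%N = false) //; apply/negbTE/negP => /andP[u /eqP v].
    rewrite e in tp; lia.
  by rewrite (_ : (t == p.1 + p.2) = false) //; apply/negbTE; rewrite neq_ltn (leq_trans tp) ?leq_addr.
- move=> p H _; rewrite /y2; case E: (p.1 == 1%N); last by apply: sum_eq1.
  case: (leqP h p.2) => hp /=; last by rewrite big1 ?ler01.
  rewrite (eq_bigr (fun t => (((t == 1 + p.2 - h)%N : nat)%:R : R))); first by apply: sum_eq1.
  move=> t _; congr (_%:R); congr nat_of_bool; apply/eqP/eqP => [<-|->]; first by rewrite addnK.
  by rewrite subnK // (leq_trans hp) // leq_addl.
Qed.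

Lemma int_y2 h c L : integral (mkI h c L) (y2 h).
Proof.
move=> p t _; rewrite /y2; case: ifP => _.
  by case: (_ && _); [right|left].
by case: (_ == _); [right|left].
Qed.

Lemma lim_y1 h c : (0 < h)%N -> respects_limits (mkI h c txL1) B y1.
Proof.
move=> h0 t j; rewrite load_dec // dS_y1 bS_y1 lS_y /wD /wB /wL1 /=.
case: j => [[|[|j]] jm] /=; rewrite ?mulr0 ?addr0 ?add0r.
- rewrite -mulrDl; apply: ler_piMl; first exact/ltW/Bpos.
  apply: bsum_le1 => /andP[_ u]; rewrite negb_and -ltnNge; apply/orP; left; lia.
- rewrite -mulrDl; apply: ler_piMl; first exact/ltW/Bpos.
  apply: bsum_le1 => /andP[_ u]; rewrite negb_and -ltnNge; apply/orP; left; lia.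
- by apply/ltW/Bpos.
Qed.

Lemma lim_y2 h c : (0 < h)%N -> respects_limits (mkI h c txB) B (y2 h).
Proof.
move=> h0 t j; rewrite load_dec // dS_y2 bS_y2 lS_y2 // /= /wD /wB /=.
case: j => [[|[|j]] jm] /=; rewrite ?mulr0 ?mul0r ?addr0 ?add0r.
- by apply/ltW/Bpos.
- rewrite -mulrDl; apply: ler_piMl; first exact/ltW/Bpos.
  apply: bsum_le1 => /andP[_ u]; rewrite negb_and -ltnNge; apply/orP; left; lia.
- by apply/ltW/Bpos.
Qed.


Lemma SW_y1 h c : (0 < h)%N -> (h <= c)%N ->
  SW (mkI h c txL1) (h + c) y1 = 3 * h%:R + c%:R.
Proof.
move=> h0 hc; rewrite SW_dec //.
under eq_bigr do rewrite dS_y1 bS_y1 lS_y /= mul1r.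
rewrite !big_split /= -mulr_sumr !sum_range; last 9 first.
all: try lia.
rewrite addnK -addnA addnK addnK; ring.
Qed.

Lemma SW_y2 h c : (0 < h)%N ->
  SW (mkI h c txB) (h + c) (y2 h) = 2 * h%:R + 2 * c%:R.
Proof.
move=> h0; rewrite SW_dec //.
under eq_bigr do rewrite dS_y2 bS_y2 lS_y2 // /=.
rewrite !big_split /= big1 // -!mulr_sumr !sum_range; last 6 first.
all: try lia.
rewrite addnK addnK; ring.
Qed.

Lemma OPT1_ub h c y H : (0 < h)%N -> fractional (mkI h c txL1) y ->
  SW (mkI h c txL1) H y <= 3 * h%:R + c%:R.
Proof.
move=> h0 fy; rewrite SW_dec //=.
under eq_bigr do rewrite mul1r.
rewrite !big_split /= -mulr_sumr.
have := @sum_dS h c txL1 y h0 fy H; have := @sum_bS h c txL1 y h0 fy H.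
have := @sum_lS h c txL1 y h0 fy H.
lra.
Qed.

Lemma OPT2_ub h c y T : (0 < h)%N -> (1 < m)%N -> fractional (mkI h c txB) y ->
  respects_limits (mkI h c txB) B y ->
  SW (mkI h c txB) T y <= 2 * T%:R.
Proof.
move=> h0 m1 fy ry; rewrite SW_dec //=.
have -> : 2 * T%:R = \sum_(1 <= t < T.+1) (2:R) by rewrite sumr_const_nat subn1 /= mulr_natr.
apply: ler_sum_nat => t _.
set j1 := Ordinal m1.
have := ry t j1; rewrite load_dec // /= /wD /wB /= -!mulrDl.
rewrite -[X in _ <= X -> _]mul1r ler_pM2r ?Bpos // => le1.
have := @dS_ge0 h c txB y h0 fy t; lra.
Qed.


Lemma ALG1_ub h c x H D (j0 : 'I_m) : (j0 : nat) = 0%N ->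
  (0 < h)%N -> (h <= H)%N -> fractional (mkI h c txL1) x ->
  \sum_(h.+1 <= t < H.+1) load (mkI h c txL1) x t j0 <= ((H - h)%:R + D) * B j0 ->
  SW (mkI h c txL1) H x <= \sum_(1 <= t < h.+1) dS h x t + 2 * h%:R + (H - h)%:R + D.
Proof.
move=> j00 h0 hH fx win.
have wD0 : wD j0 = B j0 by rewrite /wD j00.
have wB0 : wB j0 = 0 by rewrite /wB j00.
have wL0 : wL1 j0 = B j0 by rewrite /wL1 j00.
have e1 : \sum_(h.+1 <= t < H.+1) load (mkI h c txL1) x t j0 =
   (\sum_(h.+1 <= t < H.+1) dS h x t + \sum_(h.+1 <= t < H.+1) lS h c x t) * B j0.
  rewrite mulrDl !mulr_suml -big_split /=; apply: eq_bigr => t _.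
  by rewrite load_dec //= wD0 wB0 wL0 mulr0 addr0.
rewrite e1 ler_pM2r ?Bpos // in win.
have el : \sum_(1 <= t < h.+1) lS h c x t = 0.
  by rewrite big_nat big1 // => t /andP[_ th]; exact: (@lS_early h c txL1 x h0 fx t th).
have sb : \sum_(1 <= t < h.+1) bS h x t + \sum_(h.+1 <= t < H.+1) bS h x t <= h%:R.
  by rewrite -big_cat_nat //; apply: (@sum_bS h c txL1 x h0 fx H).
rewrite SW_dec // (@big_cat_nat _ _ _ h.+1) //=.
under eq_bigr do rewrite mul1r.
under [X in _ + X <= _]eq_bigr do rewrite mul1r.
rewrite !big_split /= -!mulr_sumr el.
lra.
Qed.

Lemma ALG2_ub h c x H D (j1 : 'I_m) : (j1 : nat) = 1%N ->
  (0 < h)%N -> (h <= H)%N -> fractional (mkI h c txB) x ->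
  \sum_(1 <= t < h.+1) load (mkI h c txB) x t j1 <= (h%:R + D) * B j1 ->
  \sum_(h.+1 <= t < H.+1) load (mkI h c txB) x t j1 <= ((H - h)%:R + D) * B j1 ->
  SW (mkI h c txB) H x <= 2 * (h%:R + D) + 2 * ((H - h)%:R + D) - \sum_(1 <= t < h.+1) dS h x t.
Proof.
move=> j11 h0 hH fx win1 win2.
have wD1 : wD j1 = B j1 by rewrite /wD j11.
have wB1 : wB j1 = B j1 by rewrite /wB j11.
have e1 : forall a b, \sum_(a <= t < b) load (mkI h c txB) x t j1 =
   (\sum_(a <= t < b) dS h x t + \sum_(a <= t < b) bS h x t + \sum_(a <= t < b) lS h c x t) * B j1.
  move=> a b; rewrite !mulrDl !mulr_suml -!big_split /=; apply: eq_bigr => t _.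
  by rewrite load_dec //= wD1 wB1.
rewrite e1 ler_pM2r ?Bpos // in win1.
rewrite e1 ler_pM2r ?Bpos // in win2.
have dL : 0 <= \sum_(h.+1 <= t < H.+1) dS h x t.
  by apply: sumr_ge0 => t _; exact: (@dS_ge0 h c txB x h0 fx t).
rewrite SW_dec // (@big_cat_nat _ _ _ h.+1) //=.
rewrite !big_split /= -!mulr_sumr.
lra.
Qed.


Lemma run_same (A : online_alg R m) h c L1 L2 k t : (t <= h)%N ->
  run A (mkI h c L1) (1%N, k) t = run A (mkI h c L2) (1%N, k) t.
Proof.
move=> th; rewrite /run /prefix; congr (nth _ (nth _ (A _) _) _).
apply/eq_in_map => s; rewrite mem_iota => /andP[_ st].
rewrite add0n in st.
have sh : (s < h.+1)%N by apply: (leq_trans st); apply: leqW.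
rewrite !(nth_map 0%N) ?size_iota // !nth_iota // add0n.
case: (s == 0) => //.
have -> : (s == h) = false by apply/negbTE; rewrite neq_ltn (leq_trans st th).
done.
Qed.

End Gadget.


Lemma fin2 (R : realType) (e h c G D X T : R) : h < 2 * X -> c <= h + 1 ->
  G <= e / 8 * T -> D <= e / 8 * T -> 1 <= e * T -> h + c = T ->
  2 * (h + D) + 2 * ((c + G) + D) - X <= (7 / 8 + e) * (2 * h + 2 * c).
Proof.
move=> hX ch HG HD eT hcT.
have -> : (7 / 8 + e) * (2 * h + 2 * c) = 7 / 4 * (h + c) + 2 * (e * T) by rewrite -hcT; field.
have E : e / 8 * T = (e * T) / 8 by field.
rewrite E in HG HD.
lra.
Qed.

Lemma fin1 (R : realType) (e h c G D X T : R) : 2 * X <= h -> c <= h + 1 ->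
  G <= e / 8 * T -> D <= e / 8 * T -> 1 <= e * T -> h + c = T -> 0 <= e * h ->
  X + 2 * h + (c + G) + D <= (7 / 8 + e) * (3 * h + c).
Proof.
move=> hX ch HG HD eT hcT eh.
have -> : (7 / 8 + e) * (3 * h + c) = 7 / 8 * (3 * h + c) + 2 * (e * h) + e * T by rewrite -hcT; field.
have E : e / 8 * T = (e * T) / 8 by field.
rewrite E in HG HD.
lra.
Qed.

Unset Implicit Arguments.
Unset Strict Implicit.

Theorem theorem4 (R : realType) (m : nat) (B : 'I_m -> R)
    (A : online_alg R m) (Delta : nat -> R) (Gamma : nat -> nat) :
  (2 <= m)%N ->
  (forall j, 0 < B j) ->
  (forall I : input R m, valid_input I -> fractional I (run A I)) ->
  little_o_id Delta ->
  little_o_id (fun T => (Gamma T)%:R : R) ->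
  (forall (T : nat) (I : input R m), valid_input I -> (size I <= T)%N ->
     avg_block_size I B (Delta T) (T + Gamma T) (run A I)) ->
  forall eps : R, 0 < eps ->
  exists T1 : nat, forall T : nat, (T1 <= T)%N ->
    exists I : input R m,
      [/\ valid_input I, (size I <= T)%N,
          (forall p, p \in tids I -> tx_rho (tx_of I p) = 0) &
          exists y : alloc R,
            [/\ feasible_integral I B y,
                (forall y' : alloc R, feasible_integral I B y' ->
                   SW I T y' <= SW I T y),
                0 < SW I T y &
                SW I (T + Gamma T) (run A I) <= (7 / 8 + eps) * SW I T y]].
Proof.
move=> m2 Bpos fracA oD oG avgA eps eps0.
have e8 : 0 < eps / 8 by apply: divr_gt0.
have [ND HD] := oD _ e8.
have [NG HG] := oG _ e8.
have ie0 : 0 <= eps^-1 by rewrite invr_ge0 ltW.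
have N1P := archi_boundP ie0.
set N1 := Num.bound eps^-1 in N1P.
exists (maxn (maxn ND NG) (maxn N1 2)) => T.
rewrite !geq_max => /andP[/andP[TD TG] /andP[T1 T2]].
have {}HD := HD T TD; have {}HG := HG T TG.
rewrite normr_nat in HG.
move: HD; rewrite ler_norml => /andP[HD1 HD2].
have eT : 1 <= eps * T%:R.
  have : eps^-1 <= T%:R by apply: (le_trans (ltW N1P)); rewrite ler_nat.
  by rewrite -[eps^-1 <= _](ler_pM2l eps0) mulfV ?gt_eqF.
pose h := T./2; pose c := (T - h)%N.
have h0 : (0 < h)%N by rewrite /h -divn2 divn_gt0.
have hc : (h <= c)%N by rewrite /c /h; lia.
have ch : (c <= h.+1)%N by rewrite /c /h; lia.
have hcT : (h + c = T)%N by rewrite /c /h; lia.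
have hT : (h < T)%N by lia.
have B0 : forall j, 0 <= B j by move=> j; apply: ltW.
have j0P : (0 < m)%N by lia.
have j1P : (1 < m)%N by lia.
pose j0 := Ordinal j0P; pose j1 := Ordinal j1P.
pose H := (T + Gamma T)%N.
have hH : (h <= H)%N by rewrite /H; lia.
have HhE : ((H - h)%:R : R) = c%:R + (Gamma T)%:R by rewrite -natrD; congr (_%:R); rewrite /H /c; lia.
have hcR : (h%:R + c%:R : R) = T%:R by rewrite -natrD hcT.
have chR : (c%:R : R) <= h%:R + 1 by rewrite -[1]/(1%:R) -natrD ler_nat addn1.
have h1R : (1 : R) <= h%:R by rewrite ler1n.
have c0R : (0 : R) <= c%:R by apply: ler0n.
have g0R : (0 : R) <= (Gamma T)%:R by apply: ler0n.
have ehR : 0 <= eps * h%:R by apply: mulr_ge0; [apply: ltW|apply: ler0n].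
have ecR : eps * T%:R = eps * h%:R + eps * c%:R by rewrite -hcR mulrDr.
pose I1 := mkI B h c (txL1 B).
pose I2 := mkI B h c (txB B).
have vI1 : valid_input I1.
  apply: (valid_mkI h0 B0); [by rewrite ler01| by [] | by move=> j; rewrite /= /wL1; case: ifP].
have vI2 : valid_input I2.
  apply: (valid_mkI h0 B0); [by rewrite ler0n| by [] | by move=> j; rewrite /= /wB; case: ifP].
have sI : forall L, (size (mkI B h c L) <= T)%N by move=> L; rewrite size_mkI.
pose X := \sum_(1 <= t < h.+1) dS h (run A I1) t.
have X2 : \sum_(1 <= t < h.+1) dS h (run A I2) t = X.
  apply: eq_big_nat => t /andP[_ th]; apply: eq_bigr => k _.
  by apply: run_same.
have late : forall I j, valid_input I -> (size I <= T)%N ->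
    \sum_(h.+1 <= t < H.+1) load I (run A I) t j <= ((H - h)%:R + Delta T) * B j.
  move=> I j vI sz.
  have K1 : (1 <= H - h)%N by rewrite subn_gt0 (leq_trans hT) // leq_addr.
  have E1 : (h.+1 + (H - h) = H.+1)%N by rewrite addSn subnKC.
  have E2 : (h.+1 + (H - h) - 1 <= H)%N by rewrite E1 subn1.
  by have := avgA T I vI sz j h.+1 (H - h)%N isT K1 E2; rewrite E1.
case: (lerP (2 * X) h%:R) => hX.
- exists I1; split; [exact: vI1 | exact: sI | exact: (rho_mkI h0) |].
  have SWy := SW_y1 B h0 hc; rewrite hcT in SWy.
  exists (y1 R); split.
  + by split; [apply: frac_y1 | apply: int_y1 | apply: lim_y1].
  + by move=> y' [fy _ _]; rewrite SWy; apply: OPT1_ub.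
  + by rewrite SWy; lra.
  have := ALG1_ub Bpos (j0 := j0) erefl h0 hH (fracA _ vI1) (late _ _ vI1 (sI _)).
  rewrite -/X HhE SWy => le1.
  apply: (le_trans le1).
  exact: (fin1 hX chR HG HD2 eT hcR ehR).
- exists I2; split; [exact: vI2 | exact: sI | exact: (rho_mkI h0) |].
  have SWy : SW I2 (h + c) (y2 R h) = 2 * h%:R + 2 * c%:R by apply: SW_y2.
  rewrite hcT in SWy.
  exists (y2 R h); split.
  + by split; [apply: frac_y2 | apply: int_y2 | apply: lim_y2].
  + by move=> y' [fy _ ry]; rewrite SWy; have := OPT2_ub Bpos T h0 j1P fy ry; lra.
  + by rewrite SWy; lra.
  have early : \sum_(1 <= t < h.+1) load I2 (run A I2) t j1 <= (h%:R + Delta T) * B j1.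
    have E3 : (1 + h - 1 <= H)%N by rewrite add1n subn1.
    by have := avgA T I2 vI2 (sI _) j1 1%N h isT h0 E3; rewrite add1n.
  have := ALG2_ub Bpos (j1 := j1) erefl h0 hH (fracA _ vI2) early (late _ _ vI2 (sI _)).
  rewrite X2 HhE SWy => le1.
  apply: (le_trans le1).
  exact: (fin2 hX chR HG HD2 eT hcR).
Qed.
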